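(* For all integers $n$ and $\alpha$ with $n\le\alpha\le 2^n$, there exists a minimal $n$-state nondeterministic finite automaton accepting a star-free language whose equivalent minimal deterministic finite automaton has exactly $\alpha$ states.
   Context: Nondeterministic finite automata (NFAs) have a single initial state and a transition function $\delta:Q\times\Sigma\to 2^Q$ that may map to the empty set; a non-accepting sink state is not needed and not counted for NFAs. Deterministic finite automata (DFAs) are complete (every state has exactly one successor on every letter), so a sink state is counted. A minimal $n$-state NFA is an NFA with $n$ states such that no NFA with fewer states accepts the same language. A language $L\subseteq\Sigma^*$ is star-free if it can be obtained from the languages $\{a\}$, $a\in\Sigma$, by finitely many applications of union, complementation (with respect to $\Sigma^*$), and concatenation. *)

(* Defs.v *)
From mathcomp Require Import all_boot.
Set Implicit Arguments. Unset Strict Implicit. Unset Printing Implicit Defensive.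

Definition lang (Sigma : Type) := seq Sigma -> Prop.

(* NFA: single initial state, transition function Q x Sigma -> 2^Q (may be empty),
   set of final states. No sink state is required. *)
Record nfa (Sigma Q : finType) := NFA {
  nfa_init : Q;
  nfa_delta : Q -> Sigma -> {set Q};
  nfa_final : {set Q} }.

Definition nfa_step (Sigma Q : finType) (A : nfa Sigma Q) (S : {set Q}) (a : Sigma)
  : {set Q} := \bigcup_(q in S) nfa_delta A q a.

Definition nfa_reach (Sigma Q : finType) (A : nfa Sigma Q) (w : seq Sigma) : {set Q} :=
  foldl (nfa_step A) [set nfa_init A] w.

Definition nfa_lang (Sigma Q : finType) (A : nfa Sigma Q) : lang Sigma :=
  fun w => nfa_reach A w :&: nfa_final A != set0.

Record dfa (Sigma Q : finType) := DFA {
  dfa_init : Q;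
  dfa_delta : Q -> Sigma -> Q;
  dfa_final : {set Q} }.

Definition dfa_lang (Sigma Q : finType) (D : dfa Sigma Q) : lang Sigma :=
  fun w => foldl (dfa_delta D) (dfa_init D) w \in dfa_final D.

Definition minimal_nfa (Sigma Q : finType) (A : nfa Sigma Q) : Prop :=
  forall (Q' : finType) (B : nfa Sigma Q'),
    #|Q'| < #|Q| -> ~ (forall w, nfa_lang B w <-> nfa_lang A w).

Definition min_dfa_size (Sigma : finType) (L : lang Sigma) (alpha : nat) : Prop :=
  (exists (Q : finType) (D : dfa Sigma Q), #|Q| = alpha /\ forall w, dfa_lang D w <-> L w)
  /\ (forall (Q : finType) (D : dfa Sigma Q), #|Q| < alpha ->
        ~ (forall w, dfa_lang D w <-> L w)).

Inductive star_free (Sigma : Type) : lang Sigma -> Prop :=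
  | sf_letter (a : Sigma) : star_free (fun w => w = [:: a])
  | sf_union (L1 L2 : lang Sigma) :
      star_free L1 -> star_free L2 -> star_free (fun w => L1 w \/ L2 w)
  | sf_compl (L : lang Sigma) : star_free L -> star_free (fun w => ~ L w)
  | sf_concat (L1 L2 : lang Sigma) :
      star_free L1 -> star_free L2 ->
      star_free (fun w => exists u v, w = u ++ v /\ L1 u /\ L2 v)
  | sf_ext (L L' : lang Sigma) :
      star_free L -> (forall w, L w <-> L' w) -> star_free L'.

(* Main.v *)
Require Import Defs.
From mathcomp Require Import all_boot zify.
From Stdlib Require Import Classical.
Set Implicit Arguments. Unset Strict Implicit. Unset Printing Implicit Defensive.

Section NFAGen.
Variables (Sigma Q : finType) (A : nfa Sigma Q).

Definition acc (S : {set Q}) (u : seq Sigma) : bool :=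
  foldl (nfa_step A) S u :&: nfa_final A != set0.

Lemma lang_cat x u : nfa_lang A (x ++ u) <-> acc (nfa_reach A x) u.
Proof. by rewrite /nfa_lang /nfa_reach /acc foldl_cat. Qed.

Lemma step_mono (S T : {set Q}) a : S \subset T -> nfa_step A S a \subset nfa_step A T a.
Proof.
move=> sST; apply/subsetP=> p /bigcupP [q qS pq]; apply/bigcupP; exists q => //.
exact: (subsetP sST).
Qed.

Lemma foldl_mono (S T : {set Q}) w : S \subset T ->
  foldl (nfa_step A) S w \subset foldl (nfa_step A) T w.
Proof. elim: w S T => //= a w IH S T sST; apply: IH; exact: step_mono. Qed.

Lemma acc_mono (S T : {set Q}) w : S \subset T -> acc S w -> acc T w.
Proof.
move=> sST; rewrite /acc; apply: contra_neq => h; apply/eqP; rewrite -subset0 -h.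
by apply: setSI; apply: foldl_mono.
Qed.

Lemma foldl_split (S : {set Q}) w p : p \in foldl (nfa_step A) S w ->
  exists2 q, q \in S & p \in foldl (nfa_step A) [set q] w.
Proof.
elim: w S => [|a w IH] S /=; first by move=> pS; exists p => //; rewrite inE.
move=> /IH [q' /bigcupP [q qS q'q] pq']; exists q => //.
apply: (subsetP (foldl_mono w _)) pq'; apply/subsetP=> r; rewrite inE => /eqP->.
by apply/bigcupP; exists q => //; rewrite inE.
Qed.

Lemma acc_split (S : {set Q}) w : acc S w -> exists q, (q \in S) && acc [set q] w.
Proof.
rewrite /acc => /set0Pn [p]; rewrite inE => /andP [/foldl_split [q qS pq] pF].
exists q; rewrite qS /=; apply/set0Pn; exists p; by rewrite inE pq.
Qed.

End NFAGen.

Section NFAGen2.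
Variables (Sigma Q : finType) (A : nfa Sigma Q).

Lemma fooling (I : finType) (x y : I -> seq Sigma) :
  (forall i, nfa_lang A (x i ++ y i)) ->
  (forall i j, nfa_lang A (x i ++ y j) -> nfa_lang A (x j ++ y i) -> i = j) ->
  #|I| = #|Q| -> minimal_nfa A.
Proof.
move=> Hd Hij HI Q' B ltQ eqL.
have ex i : exists q : Q', (q \in nfa_reach B (x i)) && acc B [set q] (y i).
  apply: acc_split; apply/lang_cat; apply/eqL; exact: Hd.
pose f i := xchoose (ex i).
have finj : injective f.
  move=> i j fij; have := xchooseP (ex i); have := xchooseP (ex j).
  rewrite -/(f i) -/(f j) -fij => /andP [rj aj] /andP [ri ai].
  apply: Hij; apply/eqL; apply/lang_cat.
    apply: acc_mono aj; by rewrite sub1set.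
  apply: acc_mono ai; by rewrite sub1set.
have := @leq_card _ _ f finj; rewrite HI => h; by rewrite ltnNge h in ltQ.
Qed.

Definition closedR (R : {set {set Q}}) := forall S a, S \in R -> nfa_step A S a \in R.

Lemma dfa_upper (R : {set {set Q}}) (init : [set nfa_init A] \in R) (cl : closedR R) :
  exists (Q' : finType) (D : dfa Sigma Q'), #|Q'| = #|R| /\
     forall w, dfa_lang D w <-> nfa_lang A w.
Proof.
pose T := {S : {set Q} | S \in R}.
pose del (S : T) a : T := exist _ (nfa_step A (val S) a) (cl _ a (valP S)).
pose D := DFA (exist (fun S => S \in R) _ init) del [set S : T | val S :&: nfa_final A != set0].
exists T, D; split; first by rewrite card_sig; apply: eq_card => S; rewrite inE.
have inv w (s : T) : val (foldl del s w) = foldl (nfa_step A) (val s) w.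
  by elim: w s => //= a w IH s; rewrite IH.
by move=> w; rewrite /dfa_lang /nfa_lang /nfa_reach inE inv.
Qed.

Lemma reach_inR (R : {set {set Q}}) (init : [set nfa_init A] \in R) (cl : closedR R) w :
  nfa_reach A w \in R.
Proof.
rewrite /nfa_reach; move: init; elim: w [set nfa_init A] => //= a w IH S SR.
by apply: IH; apply: cl.
Qed.

Lemma min_dfa_gen (R : {set {set Q}}) (init : [set nfa_init A] \in R) (cl : closedR R)
  (reach : forall S, S \in R -> exists w, nfa_reach A w == S)
  (dist : forall S T, S \in R -> T \in R -> (forall u, acc A S u = acc A T u) -> S = T) :
  min_dfa_size (nfa_lang A) #|R|.
Proof.
split; first exact: dfa_upper.
move=> Q' D ltQ eqL.
pose T := {S : {set Q} | S \in R}.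
pose W (S : T) := xchoose (reach _ (valP S)).
pose g S := foldl (dfa_delta D) (dfa_init D) (W S).
have ginj : injective g.
  move=> S1 S2 gS; apply: val_inj; apply: dist; try exact: valP.
  have eS S : nfa_reach A (W S) = val S by apply/eqP; exact: xchooseP (reach _ (valP S)).
  have key S u : acc A (val S) u <-> dfa_lang D (W S ++ u).
    rewrite -eS; split => h; [apply/eqL/lang_cat | apply/lang_cat/eqL]; exact: h.
  have sw S S' u : g S = g S' -> acc A (val S) u -> acc A (val S') u.
    move=> e /key; rewrite /dfa_lang foldl_cat -/(g S) e -foldl_cat; exact: (proj2 (key _ _)).
  by move=> u; apply/idP/idP; apply: sw.
have := @leq_card _ _ g ginj; rewrite card_sig => h.
have : #|R| <= #|Q'| by move: h; rewrite (eq_card (B:=R)) // => S; rewrite inE.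
by rewrite leqNgt ltQ.
Qed.

End NFAGen2.

Section SF.
Variable Sigma : finType.
Variable a0 : Sigma.
Implicit Types L : lang Sigma.

Definition catL L1 L2 : lang Sigma := fun w => exists u v, w = u ++ v /\ L1 u /\ L2 v.

Lemma sf_cat L1 L2 : star_free L1 -> star_free L2 -> star_free (catL L1 L2).
Proof. exact: sf_concat. Qed.

Lemma sf_empty : star_free (fun _ : seq Sigma => False).
Proof.
apply: sf_ext (sf_compl (sf_union (sf_letter a0) (sf_compl (sf_letter a0)))) _.
by move=> w; split => // h; apply: h; case: (classic (w = [:: a0])) => h'; [left|right].
Qed.

Lemma sf_all : star_free (fun _ : seq Sigma => True).
Proof. by apply: sf_ext (sf_compl sf_empty) _ => w; split => _ //. Qed.

Lemma sf_letters (p : pred Sigma) : star_free (fun w => exists a, w = [:: a] /\ p a).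
Proof.
have H (l : seq Sigma) : star_free (fun w => exists a, [/\ a \in l, w = [:: a] & p a]).
  elim: l => [|x l IH].
    apply: sf_ext sf_empty _ => w; split => //; by case=> a [].
  case px: (p x).
    apply: sf_ext (sf_union (sf_letter x) IH) _ => w; split.
      case=> [->|[a [al wa pa]]]; first by exists x; rewrite inE eqxx.
      by exists a; rewrite inE al orbT.
    case=> a []; rewrite inE => /orP [/eqP -> -> _|al wa pa]; first by left.
    by right; exists a.
  apply: sf_ext IH _ => w; split; first by case=> a [al wa pa]; exists a; rewrite inE al orbT.
  case=> a []; rewrite inE => /orP [/eqP ->|al wa pa]; first by rewrite px.
  by exists a.
apply: sf_ext (H (enum Sigma)) _ => w; split; first by case=> a [_ ? ?]; exists a.
by case=> a [? ?]; exists a; rewrite mem_enum.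
Qed.

Lemma sf_pairs (r : rel Sigma) : star_free (fun w => exists a b, w = [:: a; b] /\ r a b).
Proof.
have H (l : seq Sigma) : star_free (fun w => exists a b, [/\ a \in l, w = [:: a; b] & r a b]).
  elim: l => [|x l IH].
    apply: sf_ext sf_empty _ => w; split => //; by case=> a [b []].
  apply: sf_ext (sf_union (sf_cat (sf_letter x) (sf_letters (r x))) IH) _ => w; split.
    case=> [[u [v [-> [-> [b [-> rb]]]]]]|[a [b [al wa rab]]]].
      by exists x, b; rewrite inE eqxx.
    by exists a, b; rewrite inE al orbT.
  case=> a [b []]; rewrite inE => /orP [/eqP -> -> rb|al wa rab].
    by left; exists [:: x], [:: b]; split => //; split => //; exists b.
  by right; exists a, b.
apply: sf_ext (H (enum Sigma)) _ => w; split; first by case=> a [b [_ ? ?]]; exists a, b.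
by case=> a [b [? ?]]; exists a, b; rewrite mem_enum.
Qed.

Lemma sf_inter L1 L2 : star_free L1 -> star_free L2 -> star_free (fun w => L1 w /\ L2 w).
Proof.
move=> h1 h2; apply: sf_ext (sf_compl (sf_union (sf_compl h1) (sf_compl h2))) _ => w.
split; last by case=> ? ? [].
move=> h; split; apply: NNPP => n; apply: h; by [left|right].
Qed.

Lemma path_factor (r : rel Sigma) c w :
  ~~ path r c w <-> exists u a b v, c :: w = u ++ [:: a, b & v] /\ ~~ r a b.
Proof.
elim: w c => [|d w IH] c /=.
  split => //; case=> [[|x [|y u]]] [a [b [v []]]] //=.
split.
  case rcd: (r c d) => /= h.
    have [u [a [b [v [e rab]]]]] := (proj1 (IH d)) h.
    by exists (c :: u), a, b, v; rewrite e.
  by exists [::], c, d, w; rewrite rcd.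
case=> [[|x u]] [a [b [v []]]] /=.
  by case=> -> -> _ rab; rewrite (negbTE rab).
case=> _ e rab; rewrite negb_and; apply/orP; right; apply/IH.
by exists u, a, b, v.
Qed.

Lemma sf_local (first : pred Sigma) (r : rel Sigma) (lst : pred Sigma) :
  star_free (fun w => if w is c :: w' then [&& first c, path r c w' & lst (last c w')]
                      else true).
Proof.
pose A1 := catL (fun u => exists a, u = [:: a] /\ ~~ first a) (fun _ => True).
pose A2 := catL (catL (fun _ => True) (fun u => exists a b, u = [:: a; b] /\ ~~ r a b))
                (fun _ => True).
pose A3 := catL (fun _ => True) (fun u => exists a, u = [:: a] /\ ~~ lst a).
have s1 : star_free A1 := sf_cat (sf_letters _) sf_all.
have s2 : star_free A2 := sf_cat (sf_cat sf_all (sf_pairs _)) sf_all.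
have s3 : star_free A3 := sf_cat sf_all (sf_letters _).
apply: sf_ext (sf_compl (sf_union s1 (sf_union s2 s3))) _ => w.
have e1 : A1 w <-> (if w is c :: _ then ~~ first c else false).
  split; first by case=> u [v [-> [[a [-> fa]] _]]].
  case: w => // c w' fc; exists [:: c], w'; split => //; split => //; by exists c.
have e2 : A2 w <-> (if w is c :: w' then ~~ path r c w' else false).
  split.
    case=> u [v [-> [[u1 [u2 [-> [_ [a [b [-> rab]]]]]] _]]]].
    case e: ((u1 ++ [:: a; b]) ++ v) => [|c w'].
      by case: u1 e.
    apply/(path_factor r c w'); exists u1, a, b, v; by rewrite -e -catA.
  case: w {e1} => // c w' /path_factor [u [a [b [v [-> rab]]]]].
  exists (u ++ [:: a; b]), v; split; first by rewrite -catA.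
  split => //; exists u, [:: a; b]; split => //; split => //; by exists a, b.
have e3 : A3 w <-> (if w is c :: w' then ~~ lst (last c w') else false).
  split.
    case=> u [v [-> [_ [a [-> la]]]]].
    case e: (u ++ [:: a]) => [|c w']; first by case: u e.
    by move: (congr1 (last c) e); rewrite cats1 last_rcons /= => <-.
  case: w {e1 e2} => // c w' la; exists (belast c w'), [:: last c w']; split.
    by rewrite cats1 -lastI.
  by split => //; exists (last c w').
split.
  move=> h; case: w e1 e2 e3 h => [|c w'] e1 e2 e3 h //.
  apply/and3P; split; apply: negbNE; apply/negP => n; apply: h.
  - by left; apply/e1.
  - by right; left; apply/e2.
  - by right; right; apply/e3.
case: w e1 e2 e3 => [|c w'] e1 e2 e3.
  by move=> _ [/e1|[/e2|/e3]].
move=> /and3P [f p l] [/e1|[/e2|/e3]] /=; by [rewrite f|rewrite p|rewrite l].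
Qed.

End SF.

Lemma mid (T : finType) (A U : {set T}) k : A \subset U -> #|A| <= k <= #|U| ->
  exists B : {set T}, [/\ A \subset B, B \subset U & #|B| = k].
Proof.
move=> AU; elim: k => [|k IH].
  rewrite leqn0 => /andP [/eqP A0 _]; by exists A; rewrite A0.
move=> /andP [Ak kU]; case: (ltngtP #|A| k.+1) => [Ak'|Ak'|Ak'].
  have [B [AB BU cB]] : exists B : {set T}, [/\ A \subset B, B \subset U & #|B| = k].
    apply: IH; rewrite -ltnS Ak' /=; exact: ltnW.
  have : ~~ (U \subset B).
    apply/negP => UB; have := subset_leq_card UB; by rewrite cB leqNgt kU.
  case/subsetPn => x xU xB; exists (x |: B); split.
  - exact: subset_trans AB (subsetU1 _ _).
  - by rewrite subUset sub1set xU.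
  - by rewrite cardsU1 xB cB.
  by rewrite ltnNge Ak in Ak'.
by exists A; split; rewrite ?subxx ?Ak'.
Qed.

Section Gen.
Variable m : nat.
Notation Q := 'I_m.+1.
Notation Sig := ({set Q} + Q)%type.
Variable P : {set {set Q}}.
Hypothesis P0 : set0 \notin P.
Hypothesis P1 : forall i : Q, [set i] \in P.

Definition hP (T : {set Q}) := if T \in P then T else set0.
Definition gdelta (q : Q) (c : Sig) : {set Q} :=
  match c with inl T => hP T | inr j => if q == j then [set ord0] else set0 end.
Definition gA : nfa Sig Q := NFA ord0 gdelta [set ord0].

Definition st (c : Sig) := match c with inl T => hP T | inr _ => [set ord0] end.
Definition good (S : {set Q}) (c : Sig) :=
  match c with inl _ => S != set0 | inr j => j \in S end.

Lemma gstep S c : nfa_step gA S c = if good S c then st c else set0.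
Proof.
apply/setP => p; rewrite /nfa_step; apply/bigcupP/idP.
  case=> q qS; case: c => [T|j] /=.
    by have -> : S != set0 by apply/set0Pn; exists q.
  by case: eqP => [<-|_]; rewrite ?qS // inE.
case: c => [T|j] /=.
  case: ifP => [/set0Pn [q qS] pT|]; last by rewrite inE.
  by exists q.
case: ifP => [jS pj|]; last by rewrite inE.
by exists j => //=; rewrite eqxx.
Qed.

Definition grel := fun c d => good (st c) d.

Lemma gfold0 w : foldl (nfa_step gA) set0 w = set0.
Proof. by elim: w => //= c w IH; rewrite gstep; case: c => [T|j] /=; rewrite ?eqxx ?inE. Qed.

Lemma gfold S w : foldl (nfa_step gA) S w =
  if w is c :: w' then (if good S c && path grel c w' then st (last c w') else set0) else S.
Proof.
elim: w S => // c w IH S /=; rewrite gstep; case: ifP => gc /=; last by rewrite gfold0.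
rewrite IH; by case: w {IH}.
Qed.

Lemma in1 (S : {set Q}) x : (S :&: [set x] != set0) = (x \in S).
Proof.
apply/set0Pn/idP; first by case=> p; rewrite !inE => /andP [pS /eqP <-].
by move=> xS; exists x; rewrite !inE xS eqxx.
Qed.

Lemma glang w : nfa_lang gA w <->
  (if w is c :: w' then [&& good [set ord0] c, path grel c w' & ord0 \in st (last c w')]
   else true).
Proof.
rewrite /nfa_lang /nfa_reach /= gfold in1; case: w => [|c w]; first by rewrite inE.
by rewrite andbA; case: (_ && _); rewrite ?inE.
Qed.

Lemma gstar : star_free (nfa_lang gA).
Proof.
apply: sf_ext (sf_local (inr ord0) (good [set ord0]) grel (fun c => ord0 \in st c)) _.
by move=> w; rewrite glang.
Qed.

Lemma gacc S j : acc gA S [:: inr j] = (j \in S).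
Proof. rewrite /acc /= gstep /= in1; case: (j \in S); by rewrite ?in_set1 ?in_set0. Qed.

Lemma set1_ne0 (x : Q) : ([set x] != set0) = true.
Proof. by apply/set0Pn; exists x; rewrite inE. Qed.

Lemma gminN : minimal_nfa gA.
Proof.
apply: (@fooling _ _ gA _ (fun i : Q => [:: inl [set i]]) (fun i => [:: inr i])) => //.
  by move=> i; apply/lang_cat; rewrite /nfa_reach /= gstep /= set1_ne0 /hP P1 gacc inE.
move=> i j /lang_cat; rewrite /nfa_reach /= gstep /= set1_ne0 /hP P1 gacc inE => /eqP -> //.
Qed.

Definition gR := P :|: [set set0].

Lemma gmin : min_dfa_size (nfa_lang gA) #|gR|.
Proof.
apply: min_dfa_gen.
- by rewrite !inE P1.
- move=> S c _; rewrite gstep; case: ifP => _; last by rewrite !inE eqxx orbT.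
  case: c => [T|j] /=; last by rewrite !inE P1.
  rewrite /hP; case: ifP => TP; by rewrite !inE ?TP ?eqxx ?orbT.
- move=> S; rewrite !inE => /orP [SP|/eqP ->].
    by exists [:: inl S]; rewrite /nfa_reach /= gstep /= set1_ne0 /hP SP.
  exists [:: inl set0]; by rewrite /nfa_reach /= gstep /= /hP (negbTE P0) set1_ne0.
- move=> S T _ _ h; apply/setP => j; by rewrite -!gacc h.
Qed.

Lemma gcard : #|gR| = #|P|.+1.
Proof. by rewrite /gR setUC cardsU1 (negbTE P0) add1n. Qed.

End Gen.

Lemma general (m alpha : nat) : m.+2 <= alpha <= 2 ^ m.+1 ->
  exists (Sigma Q : finType) (A : nfa Sigma Q),
    #|Q| = m.+1 /\ minimal_nfa A /\ star_free (nfa_lang A) /\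
    min_dfa_size (nfa_lang A) alpha.
Proof.
move=> /andP [lo hi].
pose Sg := [set [set i] | i : 'I_m.+1].
pose U := [set~ (set0 : {set 'I_m.+1})].
have SgU : Sg \subset U.
  apply/subsetP => S /imsetP [i _ ->]; rewrite !inE; apply/set0Pn; exists i; by rewrite inE.
have cSg : #|Sg| = m.+1 by rewrite card_imset ?card_ord //; exact: set1_inj.
have cU : #|U| = (2 ^ m.+1).-1.
  by rewrite cardsC1 -cardsT -powersetT card_powerset cardsT card_ord.
have a1 : 0 < alpha by apply: leq_trans lo.
have hmid : #|Sg| <= alpha.-1 <= #|U|.
  rewrite cSg cU; apply/andP; split; first by rewrite -ltnS prednK.
  by rewrite -!subn1 leq_sub2r.
have [P [SgP PU cP]] := @mid _ Sg U alpha.-1 SgU hmid.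
have P0 : set0 \notin P.
  apply/negP => /(subsetP PU); by rewrite !inE eqxx.
have P1 : forall i, [set i] \in P.
  move=> i; apply: (subsetP SgP); exact: imset_f.
exists _, _, (gA P); split; first by rewrite card_ord.
split; first exact: gminN.
split; first exact: gstar.
by rewrite -(prednK a1) -cP -gcard //; apply: gmin.
Qed.

Section Un.
Variable m : nat.
Notation Q := 'I_m.+1.

Definition udelta (q : Q) (c : unit) : {set Q} := [set inord (minn q.+1 m)].
Definition uA : nfa unit Q := NFA ord0 udelta [set ord_max].

Lemma ustep (i : Q) : nfa_step uA [set i] tt = [set inord (minn i.+1 m)].
Proof. by rewrite /nfa_step big_set1. Qed.

Lemma inord_min (x : nat) : nat_of_ord (inord (minn x m) : Q) = minn x m.
Proof. rewrite inordK //; rewrite ltnS; exact: geq_minr. Qed.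

Lemma ufold (i : Q) k : foldl (nfa_step uA) [set i] (nseq k tt) = [set inord (minn (i + k) m)].
Proof.
elim: k i => [|k IH] i /=.
  congr [set _]; apply: val_inj => /=; rewrite inord_min; have := ltn_ord i; lia.
rewrite ustep IH inord_min; congr [set inord _]; lia.
Qed.

Lemma word_nseq (w : seq unit) : w = nseq (size w) tt.
Proof. by elim: w => //= [[]] w <-. Qed.

Lemma uin1 (S : {set Q}) x : (S :&: [set x] != set0) = (x \in S).
Proof.
apply/set0Pn/idP; first by case=> p; rewrite !inE => /andP [pS /eqP <-].
by move=> xS; exists x; rewrite !inE xS eqxx.
Qed.

Lemma uacc (i : Q) k : acc uA [set i] (nseq k tt) = (m <= i + k).
Proof.
rewrite /acc ufold uin1 inE /=; apply/eqP/idP => [/(congr1 val)|h].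
  rewrite /= inord_min; lia.
apply: val_inj => /=; rewrite inord_min /=; lia.
Qed.

Lemma ulang w : nfa_lang uA w <-> (m <= size w).
Proof.
rewrite {1}(word_nseq w) /nfa_lang -/(acc uA _ _) /nfa_reach -/(acc uA _ _).
by rewrite uacc.
Qed.

Lemma ustar : star_free (nfa_lang uA).
Proof.
have H k : star_free (fun w : seq unit => k <= size w).
  elim: k => [|k IH]; first by apply: sf_ext (sf_all tt) _.
  apply: sf_ext (sf_cat (sf_letter tt) IH) _ => w; split.
    by case=> u [v [-> [-> h]]].
  case: w => // [[]] w h; by exists [:: tt], w.
apply: sf_ext (H m) _ => w; by rewrite ulang.
Qed.

Lemma uminN : minimal_nfa uA.
Proof.
apply: (@fooling _ _ uA _ (fun i : Q => nseq i tt) (fun i : Q => nseq (m - i) tt)).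
- move=> [i hi]; apply/ulang; rewrite size_cat !size_nseq /=; lia.
- move=> [i hi] [j hj] /ulang h1 /ulang h2; apply: val_inj => /=; move: h1 h2.
  rewrite !size_cat !size_nseq /=; lia.
- by rewrite card_ord.
Qed.

Definition uR := [set [set i] | i : Q].

Lemma umin : min_dfa_size (nfa_lang uA) m.+1.
Proof.
have e : #|uR| = m.+1 by rewrite card_imset ?card_ord //; exact: set1_inj.
suff: min_dfa_size (nfa_lang uA) #|uR| by rewrite e.
apply: min_dfa_gen.
- exact: imset_f.
- move=> S [] /imsetP [i _ ->]; rewrite ustep; exact: imset_f.
- move=> S /imsetP [i _ ->]; exists (nseq i tt); rewrite /nfa_reach ufold.
  apply/eqP; congr [set _]; apply: val_inj => /=; rewrite inord_min /=; have := ltn_ord i; lia.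
- move=> S T /imsetP [[i hi] _ ->] /imsetP [[j hj] _ ->] h.
  have h1 := h (nseq (m - i) tt); have h2 := h (nseq (m - j) tt).
  rewrite !uacc /= in h1 h2; congr [set _]; apply: val_inj => /=.
  have t1 : m <= i + (m - i) by lia.
  have t2 : m <= j + (m - j) by lia.
  rewrite t1 in h1; rewrite t2 in h2.
  move: (esym h1) (h2) => /= k1 /esym k2; lia.
Qed.

End Un.

Theorem mainTheorem2 (n alpha : nat) :
  1 <= n -> n <= alpha <= 2 ^ n ->
  exists (Sigma Q : finType) (A : nfa Sigma Q),
    #|Q| = n /\ minimal_nfa A /\ star_free (nfa_lang A) /\
    min_dfa_size (nfa_lang A) alpha.
Proof.
case: n => // m _ /andP [lo hi].
case: (ltngtP m.+1 alpha) => [lt|gt|eq].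
  by apply: general; apply/andP; split.
  by move: gt; rewrite ltnS leqNgt lo.
rewrite -eq; exists _, _, (uA m); split; first by rewrite card_ord.
split; first exact: uminN.
split; first exact: ustar.
exact: umin.
Qed.
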